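(* Let $\varphi$ be an $\mathrm{LTL_{PSL}}$ formula, $D=(I^+,I^-)$ a partition of the set $I$ of its subformulae of the form $s\preceq s'$, and $\varphi_D$ the associated formula. If the language of the generalised Büchi automaton $\mathcal{A}_{\varphi_D}$ is non-empty, then $\varphi_D$ is $\mathrm{SLTL}$-satisfiable.
   Context: Propositional variables $\mathcal{P}$ and standpoint symbols $\mathcal{S}$ (with universal symbol $*$) are countably infinite. SLTL formulae: $\varphi ::= p \mid s \preceq s' \mid \neg\varphi \mid \varphi\wedge\varphi \mid \Diamond_s\varphi \mid \Box_s\varphi \mid X\varphi \mid \varphi\,U\,\varphi$. A model is $M=(\Pi,\lambda)$ with $\Pi\neq\emptyset$ a set of traces $\sigma:\mathbb{N}\to 2^{\mathcal{P}}$, $\lambda:\mathcal{S}\to 2^{\Pi}\setminus\{\emptyset\}$, $\lambda( * )=\Pi$; $M,\sigma,i\models p$ iff $p\in\sigma(i)$; $s\preceq s'$ holds iff $\lambda(s)\subseteq\lambda(s')$; $\Diamond_s\psi$ (resp. $\Box_s\psi$) holds at $\sigma,i$ iff $\psi$ holds at $\sigma',i$ for some (resp. all) $\sigma'\in\lambda(s)$; $X\psi$ holds at $\sigma,i$ iff $\psi$ holds at $\sigma,i+1$; $\psi U\chi$ holds at $\sigma,i$ iff $\chi$ holds at some $\sigma,i'$, $i'\ge i$, and $\psi$ at $\sigma,i''$ for all $i\le i''<i'$. $G\psi:=\neg(\top U\neg\psi)$. Satisfiable: holds at $\sigma,0$ for some $M$, $\sigma\in\Pi$. $\mathrm{LTL_{PSL}}$: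 SLTL formulae with no $X$ or $U$ in the scope of any $\Diamond_s$ or $\Box_s$. $\varphi_D:=\varphi[I^+\mapsto\top,I^-\mapsto\bot]\wedge G\big(\bigwedge_{(s\preceq s')\in I^+}(s\preceq s')\wedge\bigwedge_{(s\preceq s')\in I^-}(\Diamond_s p_{s,s'}\wedge\neg\Diamond_{s'}p_{s,s'})\big)$, where members of $I^+$ (resp. $I^-$) are replaced by $\top$ (resp. $\bot$) and the $p_{s,s'}$ are fresh variables. PSL is the temporal-free fragment; a PSL model is $(\Pi,V)$ with $\Pi$ finite nonempty, $V:\mathcal{S}\cup\mathcal{P}\to 2^{\Pi}$, $V(s)\neq\emptyset$ for all $s$, $V( * )=\Pi$; $\pi\models p$ iff $\pi\in V(p)$, $s\preceq s'$ iff $V(s)\subseteq V(s')$, $\Diamond_s\psi$/$\Box_s\psi$ iff $\psi$ holds at some/all $\pi'\in V(s)$. The closure $cl(\varphi_D)$ is the smallest set containing all subformulae of $\varphi_D$, $\top$ and $\bot$, closed under negation (identifying $\neg\neg\psi$ with $\psi$), and such that $\psi U\psi'\in cl(\varphi_D)$ implies $X(\psi U\psi')\in cl(\varphi_D)$. $B\subseteq cl(\varphi_D)$ is maximally consistent if $\top\in B$, $\bot\notin B$; $\psi\in B$ iff $\neg\psi\notin B$ for $\neg\psi\in cl(\varphi_D)$; $\psi_1\wedge\psi_2\in B$ iff $\psi_1,\psi_2\in B$; $\psi_1U\psi_2\in B$ iff $\psi_2\in B$ or $\{\psi_1,X(\psi_1U\psi_2)\}\subseteq B$. $B$ is standpoint-consistent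 if the conjunction of the members of $B$ that are PSL formulae is PSL-satisfiable; $B$ is s-elementary if maximally consistent and standpoint-consistent. $\mathcal{A}_{\varphi_D}=(Q,2^{\mathcal{P}(\varphi_D)},\delta,Q_0,\mathcal{F})$ where $\mathcal{P}(\varphi_D)$ is the set of variables of $\varphi_D$; $Q$ is the set of s-elementary sets; $Q_0=\{B\in Q:\varphi_D\in B\}$; $\mathcal{F}$ contains, for each $\psi_1U\psi_2\in cl(\varphi_D)$, the set $\{B\in Q:\psi_1U\psi_2\notin B\text{ or }\psi_2\in B\}$; $\delta(B,A)=\emptyset$ if $A\neq B\cap\mathcal{P}(\varphi_D)$, and otherwise $\delta(B,A)$ is the set of $B'\in Q$ such that for every $X\psi\in cl(\varphi_D)$, $X\psi\in B$ iff $\psi\in B'$. An infinite word is accepted if it has a run starting in $Q_0$ that visits each set of $\mathcal{F}$ infinitely often. *)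

(* Defs.v *)
From Stdlib Require Import List Arith Bool.
Import ListNotations.

(* Propositional variables and standpoint symbols are both nat (countably
   infinite); the standpoint 0 is the universal standpoint *. *)
Definition star : nat := 0.

Inductive form : Type :=
| Top : form
| Var : nat -> form
| Prec : nat -> nat -> form
| Neg : form -> form
| And : form -> form -> form
| Dia : nat -> form -> form
| Box : nat -> form -> form
| Next : form -> form
| Until : form -> form -> form.

Definition Bot : form := Neg Top.
Definition G (f : form) : form := Neg (Until Top (Neg f)).

Definition neg' (f : form) : form :=
  match f with Neg g => g | _ => Neg f end.

Fixpoint subf (psi phi : form) : Prop :=
  psi = phi \/
  match phi with
  | Top | Var _ | Prec _ _ => False
  | Neg g | Dia _ g | Box _ g | Next g => subf psi g
  | And g h | Until g h => subf psi g \/ subf psi h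
  end.

Definition vars (phi : form) (p : nat) : Prop := subf (Var p) phi.

Fixpoint temporal_free (f : form) : Prop :=
  match f with
  | Top | Var _ | Prec _ _ => True
  | Neg g | Dia _ g | Box _ g => temporal_free g
  | And g h => temporal_free g /\ temporal_free h
  | Next _ | Until _ _ => False
  end.

Fixpoint LTL_PSL (f : form) : Prop :=
  match f with
  | Top | Var _ | Prec _ _ => True
  | Neg g | Next g => LTL_PSL g
  | And g h | Until g h => LTL_PSL g /\ LTL_PSL h
  | Dia _ g | Box _ g => temporal_free g
  end.

Definition trace := nat -> nat -> Prop.  (* sigma i p  <->  p in sigma(i) *)

Record SLTL_model := {
  Pi : trace -> Prop;
  lam : nat -> trace -> Prop;
  Pi_nonempty : exists sg, Pi sg;
  lam_sub : forall s sg, lam s sg -> Pi sg;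
  lam_nonempty : forall s, exists sg, lam s sg;
  lam_star : forall sg, lam star sg <-> Pi sg
}.

Fixpoint sat (M : SLTL_model) (sg : trace) (i : nat) (f : form) : Prop :=
  match f with
  | Top => True
  | Var p => sg i p
  | Prec s s' => forall t, lam M s t -> lam M s' t
  | Neg g => ~ sat M sg i g
  | And g h => sat M sg i g /\ sat M sg i h
  | Dia s g => exists t, lam M s t /\ sat M t i g
  | Box s g => forall t, lam M s t -> sat M t i g
  | Next g => sat M sg (S i) g
  | Until g h => exists i', i <= i' /\ sat M sg i' h /\
                  forall i'', i <= i'' < i' -> sat M sg i'' g
  end.

Definition SLTL_satisfiable (f : form) : Prop :=
  exists (M : SLTL_model) (sg : trace), Pi M sg /\ sat M sg 0 f.

Fixpoint psl_sat {W : Type} (VS : nat -> W -> Prop) (VP : nat -> W -> Prop)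
  (w : W) (f : form) : Prop :=
  match f with
  | Top => True
  | Var p => VP p w
  | Prec s s' => forall u, VS s u -> VS s' u
  | Neg g => ~ psl_sat VS VP w g
  | And g h => psl_sat VS VP w g /\ psl_sat VS VP w h
  | Dia s g => exists u, VS s u /\ psl_sat VS VP u g
  | Box s g => forall u, VS s u -> psl_sat VS VP u g
  | Next _ | Until _ _ => False   (* not PSL formulae *)
  end.

(* the conjunction of the (finitely many) PSL formulae in B is PSL-satisfiable:
   there is a PSL model (finite nonempty Pi, valuation V) and a point at which
   every PSL member of B holds *)
Definition PSL_set_satisfiable (B : form -> Prop) : Prop :=
  exists (W : Type) (enum : list W) (VS VP : nat -> W -> Prop) (w0 : W),
    (forall x : W, In x enum) /\
    (forall s, exists u, VS s u) /\
    (forall u, VS star u) /\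
    (forall f, B f -> temporal_free f -> psl_sat VS VP w0 f).

Inductive cl (phi : form) : form -> Prop :=
| cl_sub : forall psi, subf psi phi -> cl phi psi
| cl_top : cl phi Top
| cl_bot : cl phi Bot
| cl_neg : forall psi, cl phi psi -> cl phi (neg' psi)
| cl_X : forall f g, cl phi (Until f g) -> cl phi (Next (Until f g)).

Definition max_consistent (phi : form) (B : form -> Prop) : Prop :=
  (forall f, B f -> cl phi f) /\
  B Top /\ ~ B Bot /\
  (forall f, cl phi f -> (B f <-> ~ B (neg' f))) /\
  (forall f g, cl phi (And f g) -> (B (And f g) <-> B f /\ B g)) /\
  (forall f g, cl phi (Until f g) ->
     (B (Until f g) <-> B g \/ (B f /\ B (Next (Until f g))))).

Definition s_elementary (phi : form) (B : form -> Prop) : Prop :=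
  max_consistent phi B /\ PSL_set_satisfiable B.

(* B' in delta(B, A) *)
Definition delta (phi : form) (B : form -> Prop) (A : nat -> Prop)
  (B' : form -> Prop) : Prop :=
  (forall p, A p <-> (vars phi p /\ B (Var p))) /\
  s_elementary phi B' /\
  (forall f, cl phi (Next f) -> (B (Next f) <-> B' f)).

(* words over 2^{P(phi)} *)
Definition word := nat -> nat -> Prop.

Definition accepted (phi : form) (w : word) : Prop :=
  exists rho : nat -> (form -> Prop),
    (s_elementary phi (rho 0) /\ rho 0 phi) /\
    (forall i, delta phi (rho i) (w i) (rho (S i))) /\
    (forall f g, cl phi (Until f g) ->
       forall n, exists m, n <= m /\ (~ rho m (Until f g) \/ rho m g)).

Definition language_nonempty (phi : form) : Prop :=
  exists w : word, (forall i p, w i p -> vars phi p) /\ accepted phi w.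

Definition inb (l : list (nat * nat)) (s s' : nat) : bool :=
  existsb (fun q => Nat.eqb (fst q) s && Nat.eqb (snd q) s') l.

Fixpoint substD (Ip : list (nat * nat)) (f : form) : form :=
  match f with
  | Top => Top
  | Var p => Var p
  | Prec s s' => if inb Ip s s' then Top else Bot
  | Neg g => Neg (substD Ip g)
  | And g h => And (substD Ip g) (substD Ip h)
  | Dia s g => Dia s (substD Ip g)
  | Box s g => Box s (substD Ip g)
  | Next g => Next (substD Ip g)
  | Until g h => Until (substD Ip g) (substD Ip h)
  end.

Fixpoint bigAnd (l : list form) : form :=
  match l with
  | [] => Top
  | [f] => f
  | f :: l' => And f (bigAnd l')
  end.

Definition phiD (phi : form) (Ip Im : list (nat * nat)) (pv : nat -> nat -> nat)
  : form :=
  And (substD Ip phi)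
      (G (bigAnd (map (fun q => Prec (fst q) (snd q)) Ip ++
                  map (fun q => And (Dia (fst q) (Var (pv (fst q) (snd q))))
                                    (Neg (Dia (snd q) (Var (pv (fst q) (snd q))))))
                      Im))).

(* Main.v *)
Require Import Defs.
From Stdlib Require Import List Arith Lia Classical ClassicalEpsilon.
Import ListNotations.

Lemma subf_refl : forall f, subf f f.
Proof. destruct f; simpl; left; reflexivity. Qed.

Lemma subf_trans : forall c a b, subf a b -> subf b c -> subf a c.
Proof.
  induction c; intros a b Hab Hbc; simpl in Hbc;
    destruct Hbc as [<-|Hbc]; try exact Hab; try contradiction; simpl; right;
    try (destruct Hbc as [Hbc|Hbc]; [left|right]); eauto.
Qed.

Fixpoint goodF (Ip : list (nat*nat)) (f : form) : Prop :=
  match f with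
  | Top | Var _ => True
  | Prec s s' => In (s, s') Ip
  | Neg g | Next g => goodF Ip g
  | And g h | Until g h => goodF Ip g /\ goodF Ip h
  | Dia _ g | Box _ g => temporal_free g /\ goodF Ip g
  end.

Lemma goodF_sub Ip : forall f g, goodF Ip f -> subf g f -> goodF Ip g.
Proof.
  induction f; intros g Hg Hs; simpl in Hs; destruct Hs as [->|Hs]; auto;
    try contradiction; simpl in Hg; try tauto;
    try (destruct Hs; [apply IHf1|apply IHf2]; tauto).
  all: apply IHf; tauto.
Qed.

Lemma tf_LTL : forall f, temporal_free f -> LTL_PSL f.
Proof. induction f; simpl; tauto. Qed.

Lemma tf_substD Ip : forall f, temporal_free f -> temporal_free (substD Ip f).
Proof. induction f; simpl; try tauto. destruct (inb Ip n n0); simpl; auto. Qed.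

Lemma good_substD Ip : forall f, LTL_PSL f -> goodF Ip (substD Ip f).
Proof.
  induction f; simpl; try tauto.
  - destruct (inb Ip n n0); simpl; auto.
  - intro H; split; [apply tf_substD; auto | apply IHf, tf_LTL; auto].
  - intro H; split; [apply tf_substD; auto | apply IHf, tf_LTL; auto].
Qed.

Lemma good_bigAnd Ip : forall l, (forall x, In x l -> goodF Ip x) -> goodF Ip (bigAnd l).
Proof.
  induction l as [|a l IH]; intros H; simpl; auto.
  destruct l as [|b l]. apply H; simpl; auto.
  split. apply H; simpl; auto. apply IH; intros; apply H; simpl; auto.
Qed.

Lemma good_phiD phi Ip Im pv : LTL_PSL phi -> goodF Ip (phiD phi Ip Im pv).
Proof.
  intros H. unfold phiD, G. simpl. split. apply good_substD; auto.
  split; auto. apply good_bigAnd. intros x Hx. apply in_app_or in Hx.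
  destruct Hx as [Hx|Hx]; apply in_map_iff in Hx; destruct Hx as [[a b] [<- Hq]]; simpl; auto.
Qed.

Definition PiT (W : nat -> Type) (VP : forall i, nat -> W i -> Prop) (t : trace) : Prop :=
  forall i, exists u : W i, forall p, t i p <-> VP i p u.
Definition lamT (W : nat -> Type) (VS VP : forall i, nat -> W i -> Prop) (s : nat) (t : trace) : Prop :=
  forall i, exists u : W i, VS i s u /\ forall p, t i p <-> VP i p u.

Definition mkM (W : nat -> Type) (VS VP : forall i, nat -> W i -> Prop)
  (ch : forall i, nat -> W i) (Hch : forall i s, VS i s (ch i s))
  (Hstar : forall i u, VS i star u) : SLTL_model.
Proof.
  refine {| Pi := PiT W VP; lam := lamT W VS VP |}.
  - exists (fun j p => VP j p (ch j 0)). intros i; exists (ch i 0); tauto.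
  - intros s t H i. destruct (H i) as [u [_ Hu]]. exists u; auto.
  - intros s. exists (fun j p => VP j p (ch j s)). intros i; exists (ch i s); split; auto; tauto.
  - intros t; split; intros H i; destruct (H i) as [u Hu]; exists u; try tauto.
    split; auto.
Defined.

Lemma tf_lemma W VS VP ch Hch Hstar (Ip : list (nat*nat)) :
  (forall s s', In (s, s') Ip -> forall i u, VS i s u -> VS i s' u) ->
  forall f, temporal_free f -> goodF Ip f -> forall i t u,
    (forall p, t i p <-> VP i p u) ->
    (sat (mkM W VS VP ch Hch Hstar) t i f <-> psl_sat (VS i) (VP i) u f).
Proof.
  intros HIp. induction f; simpl; intros Htf Hg i t u Ht; try tauto.
  - apply Ht.
  - split; intros _.
    + intros v; apply HIp; auto.
    + intros t' Ht' j. destruct (Ht' j) as [v [Hv Hv']]. exists v; split; auto.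
      eapply HIp; eauto.
  - rewrite (IHf Htf Hg i t u Ht); tauto.
  - destruct Htf, Hg. rewrite (IHf1 ltac:(assumption) ltac:(assumption) i t u Ht), (IHf2 ltac:(assumption) ltac:(assumption) i t u Ht); tauto.
  - split.
    + intros [t' [Hl Hs]]. destruct (Hl i) as [v [Hv Hv']].
      exists v; split; auto. exact (proj1 (IHf Htf (proj2 Hg) i t' v Hv') Hs).
    + intros [v [Hv Hs]].
      exists (fun j p => match Nat.eq_dec j i with left _ => VP i p v | right _ => VP j p (ch j n) end).
      split.
      * intros j. destruct (Nat.eq_dec j i) as [->|Hne].
        -- exists v; split; auto; tauto.
        -- exists (ch j n); split; auto; tauto.
      * refine (proj2 (IHf Htf (proj2 Hg) i _ v _) Hs).
        intros p; destruct (Nat.eq_dec i i); tauto.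
  - split.
    + intros H v Hv.
      set (t' := fun j p => match Nat.eq_dec j i with left _ => VP i p v | right _ => VP j p (ch j n) end).
      assert (Hl : lamT W VS VP n t').
      { intros j. unfold t'. destruct (Nat.eq_dec j i) as [->|Hne].
        -- exists v; split; auto; tauto.
        -- exists (ch j n); split; auto; tauto. }
      specialize (H t' Hl). refine (proj1 (IHf Htf (proj2 Hg) i t' v _) H).
      intros p; unfold t'; destruct (Nat.eq_dec i i); tauto.
    + intros H t' Hl. destruct (Hl i) as [v [Hv Hv']].
      exact (proj2 (IHf Htf (proj2 Hg) i t' v Hv') (H v Hv)).
Qed.

Lemma tf_neg' : forall f, temporal_free f -> temporal_free (neg' f).
Proof. destruct f; simpl; auto. Qed.

Lemma psl_neg' {W} VS VP (u : W) : forall f, psl_sat VS VP u (neg' f) -> ~ psl_sat VS VP u f.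
Proof. destruct f; simpl; tauto. Qed.

Lemma truth Phi (rho : nat -> form -> Prop) W VS VP (w0 : forall i, W i) ch Hch Hstar
  (Ip : list (nat*nat)) :
  (forall s s', In (s, s') Ip -> forall i u, VS i s u -> VS i s' u) ->
  (forall i, max_consistent Phi (rho i)) ->
  (forall i f, cl Phi (Next f) -> (rho i (Next f) <-> rho (S i) f)) ->
  (forall f g, cl Phi (Until f g) ->
     forall n, exists m, n <= m /\ (~ rho m (Until f g) \/ rho m g)) ->
  (forall i f, rho i f -> temporal_free f -> psl_sat (VS i) (VP i) (w0 i) f) ->
  goodF Ip Phi ->
  forall f, subf f Phi -> forall i,
    (rho i f <-> sat (mkM W VS VP ch Hch Hstar) (fun j p => VP j p (w0 j)) i f).
Proof.
  intros HIp Hmc Hnx Hacc Hpsl Hgood.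
  set (M := mkM W VS VP ch Hch Hstar).
  set (sg := fun j p => VP j p (w0 j)).
  assert (Htf : forall f i, subf f Phi -> temporal_free f ->
            (rho i f <-> sat M sg i f)).
  { intros f i Hs Ht. assert (Hg : goodF Ip f) by (eapply goodF_sub; eauto).
    assert (Heq := tf_lemma W VS VP ch Hch Hstar Ip HIp f Ht Hg i sg (w0 i)
                     ltac:(intros; unfold sg; tauto)).
    split.
    - intros H. apply Heq. apply Hpsl; auto.
    - intros H. apply NNPP; intros Hn.
      destruct (Hmc i) as [_ [_ [_ [Hneg _]]]].
      assert (Hc : rho i (neg' f)).
      { apply NNPP; intros Hc. apply Hn. apply (Hneg f (cl_sub _ _ Hs)); auto. }
      apply Hpsl in Hc; [|apply tf_neg'; auto].
      apply (psl_neg' _ _ _ f Hc). apply Heq; auto. }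
  induction f; intros Hs i.
  - destruct (Hmc i) as [_ [HT _]]. simpl; tauto.
  - apply Htf; simpl; auto.
  - apply Htf; simpl; auto.
  - assert (Hs' : subf f Phi) by (eapply subf_trans; [|exact Hs]; simpl; right; apply subf_refl).
    destruct (Hmc i) as [_ [_ [_ [Hneg _]]]].
    rewrite (Hneg (Neg f) (cl_sub _ _ Hs)). simpl. rewrite (IHf Hs' i). tauto.
  - assert (Hs1 : subf f1 Phi) by (eapply subf_trans; [|exact Hs]; simpl; right; left; apply subf_refl).
    assert (Hs2 : subf f2 Phi) by (eapply subf_trans; [|exact Hs]; simpl; right; right; apply subf_refl).
    destruct (Hmc i) as [_ [_ [_ [_ [Hand _]]]]].
    rewrite (Hand f1 f2 (cl_sub _ _ Hs)). simpl. rewrite (IHf1 Hs1 i), (IHf2 Hs2 i). tauto.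
  - apply Htf; auto. assert (Hg : goodF Ip (Dia n f)) by (eapply goodF_sub; eauto).
    simpl in *; tauto.
  - apply Htf; auto. assert (Hg : goodF Ip (Box n f)) by (eapply goodF_sub; eauto).
    simpl in *; tauto.
  - assert (Hs' : subf f Phi) by (eapply subf_trans; [|exact Hs]; simpl; right; apply subf_refl).
    rewrite (Hnx i f (cl_sub _ _ Hs)). simpl. apply IHf; auto.
  - assert (Hs1 : subf f1 Phi) by (eapply subf_trans; [|exact Hs]; simpl; right; left; apply subf_refl).
    assert (Hs2 : subf f2 Phi) by (eapply subf_trans; [|exact Hs]; simpl; right; right; apply subf_refl).
    assert (HclU : cl Phi (Until f1 f2)) by (apply cl_sub; auto).
    assert (HU : forall k, rho k (Until f1 f2) <-> rho k f2 \/ (rho k f1 /\ rho (S k) (Until f1 f2))).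
    { intros k. destruct (Hmc k) as [_ [_ [_ [_ [_ Hu]]]]].
      rewrite (Hu f1 f2 HclU). rewrite (Hnx k _ (cl_X _ _ _ HclU)). tauto. }
    simpl. split.
    + intros H. destruct (Hacc f1 f2 HclU i) as [m [Hm Hm']].
      assert (Cl : forall n k, k + n = m -> rho k (Until f1 f2) ->
                exists i', k <= i' /\ rho i' f2 /\ forall j, k <= j < i' -> rho j f1).
      { induction n as [|n IHn]; intros k Hk Hr.
        - rewrite Nat.add_0_r in Hk; subst k. exists m; split; auto.
          split; [tauto| intros; lia].
        - apply HU in Hr. destruct Hr as [Hr|[Hr1 Hr2]].
          + exists k; split; auto. split; auto. intros; lia.
          + destruct (IHn (S k) ltac:(lia) Hr2) as [i' [Hi1 [Hi2 Hi3]]].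
            exists i'; split; [lia|]. split; auto. intros j Hj.
            destruct (Nat.eq_dec j k) as [->|]; auto. apply Hi3; lia. }
      destruct (Cl (m - i) i ltac:(lia) H) as [i' [Hi1 [Hi2 Hi3]]].
      exists i'; split; auto. split. apply IHf2; auto.
      intros j Hj. apply IHf1; auto.
    + intros [i' [Hi1 [Hi2 Hi3]]].
      assert (Cl : forall n j, j + n = i' -> i <= j -> rho j (Until f1 f2)).
      { induction n as [|n IHn]; intros j Hj Hij.
        - rewrite Nat.add_0_r in Hj; subst j. apply HU. left. apply IHf2; auto.
        - apply HU. right. split.
          + apply IHf1; auto. apply Hi3; lia.
          + apply IHn; lia. }
      apply (Cl (i' - i) i); lia.
Qed.

Record PSLM (B : form -> Prop) : Type := mkPSLM {
  PW : Type; PVS : nat -> PW -> Prop; PVP : nat -> PW -> Prop; Pw0 : PW;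
  Pch : nat -> PW; Pch_ok : forall s, PVS s (Pch s);
  Pstar : forall u, PVS star u;
  Psat : forall f, B f -> temporal_free f -> psl_sat PVS PVP Pw0 f }.

Lemma get_PSLM B : PSL_set_satisfiable B -> exists m : PSLM B, True.
Proof.
  intros [W [en [VS [VP [w0 [_ [Hne [Hst Hs]]]]]]]].
  set (ch := fun s => proj1_sig (constructive_indefinite_description _ (Hne s))).
  assert (Hch : forall s, VS s (ch s)) by (intros s; exact (proj2_sig (constructive_indefinite_description _ (Hne s)))).
  exists (mkPSLM B W VS VP w0 ch Hch Hst Hs); auto.
Qed.

Lemma bigAnd_in Phi (B : form -> Prop) : max_consistent Phi B ->
  forall l, subf (bigAnd l) Phi -> B (bigAnd l) -> forall x, In x l -> B x.
Proof.
  intros [_ [_ [_ [_ [Hand _]]]]].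
  induction l as [|a l IH]; intros Hs HB x Hx; [destruct Hx|].
  destruct l as [|b l].
  - destruct Hx as [<-|[]]; auto.
  - change (bigAnd (a :: b :: l)) with (And a (bigAnd (b :: l))) in Hs, HB.
    apply (Hand _ _ (cl_sub _ _ Hs)) in HB. destruct Hx as [<-|Hx]; [tauto|].
    apply IH; auto; [|tauto].
    eapply subf_trans; [|exact Hs]. simpl. right; right; apply subf_refl.
Qed.

Theorem lemma5 (phi : form) (Ip Im : list (nat * nat)) (pv : nat -> nat -> nat) :
  LTL_PSL phi ->
  (forall s s', subf (Prec s s') phi <-> (In (s, s') Ip \/ In (s, s') Im)) ->
  (forall s s', In (s, s') Ip -> ~ In (s, s') Im) ->
  (forall s s', In (s, s') Im -> ~ vars phi (pv s s')) ->
  (forall s1 s1' s2 s2', In (s1, s1') Im -> In (s2, s2') Im ->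
     pv s1 s1' = pv s2 s2' -> s1 = s2 /\ s1' = s2') ->
  language_nonempty (phiD phi Ip Im pv) ->
  SLTL_satisfiable (phiD phi Ip Im pv).
Proof.
  intros Hltl _ _ _ _ [w [_ [rho [[Hse0 Hr0] [Hdel Hacc]]]]].
  set (Phi := phiD phi Ip Im pv) in *.
  assert (Hse : forall i, s_elementary Phi (rho i)).
  { intros [|i]; auto. apply (Hdel i). }
  assert (Hmc : forall i, max_consistent Phi (rho i)) by (intros i; apply Hse).
  assert (Hnx : forall i f, cl Phi (Next f) -> (rho i (Next f) <-> rho (S i) f)).
  { intros i f Hc. destruct (Hdel i) as [_ [_ H]]. apply H; auto. }
  assert (Hm : forall i, {m : PSLM (rho i) | True}).
  { intros i. apply constructive_indefinite_description. apply get_PSLM. apply Hse. }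
  set (W := fun i => PW _ (proj1_sig (Hm i))).
  set (VS := fun i => PVS _ (proj1_sig (Hm i)) : nat -> W i -> Prop).
  set (VP := fun i => PVP _ (proj1_sig (Hm i)) : nat -> W i -> Prop).
  set (w0 := fun i => Pw0 _ (proj1_sig (Hm i)) : W i).
  set (ch := fun i => Pch _ (proj1_sig (Hm i)) : nat -> W i).
  assert (Hch : forall i s, VS i s (ch i s)) by (intros; apply Pch_ok).
  assert (Hst : forall i u, VS i star u) by (intros; apply Pstar).
  assert (Hpsl : forall i f, rho i f -> temporal_free f -> psl_sat (VS i) (VP i) (w0 i) f)
    by (intros; apply Psat; auto).
  set (psi := bigAnd (map (fun q => Prec (fst q) (snd q)) Ip ++
                  map (fun q => And (Dia (fst q) (Var (pv (fst q) (snd q))))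
                                    (Neg (Dia (snd q) (Var (pv (fst q) (snd q))))))
                      Im)).
  set (U := Until Top (Neg psi)).
  assert (HsU : subf U Phi) by (unfold Phi, phiD, G; simpl; right; right; right; left; reflexivity).
  assert (Hspsi : subf psi Phi).
  { eapply subf_trans; [|exact HsU]. simpl. right; right; right; apply subf_refl. }
  assert (HsNpsi : subf (Neg psi) Phi).
  { eapply subf_trans; [|exact HsU]. simpl. right; right; left; reflexivity. }
  assert (HsNU : subf (Neg U) Phi) by (unfold Phi, phiD, G; simpl; right; right; left; reflexivity).
  assert (HNU : forall i, rho i (Neg U)).
  { induction i.
    - destruct (Hmc 0) as [_ [_ [_ [_ [Hand _]]]]].
      apply (Hand _ _ (cl_sub _ _ (subf_refl _))) in Hr0. apply Hr0.
    - destruct (Hmc i) as [_ [HT [_ [Hneg [_ Hu]]]]].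
      destruct (Hmc (S i)) as [_ [_ [_ [Hneg' _]]]].
      apply (Hneg' _ (cl_sub _ _ HsNU)). simpl. intros HSU.
      apply (Hneg _ (cl_sub _ _ HsNU)) in IHi. simpl in IHi. apply IHi.
      apply (Hu _ _ (cl_sub _ _ HsU)). right. split; auto.
      apply (Hnx i U (cl_X _ _ _ (cl_sub _ _ HsU))); auto. }
  assert (Hpsi : forall i, rho i psi).
  { intros i. specialize (HNU i).
    destruct (Hmc i) as [_ [HT [_ [Hneg [_ Hu]]]]].
    apply (Hneg _ (cl_sub _ _ HsNU)) in HNU. simpl in HNU.
    apply NNPP; intros Hn. apply HNU. apply (Hu _ _ (cl_sub _ _ HsU)). left.
    apply (Hneg _ (cl_sub _ _ HsNpsi)). simpl. auto. }
  assert (HIp : forall s s', In (s, s') Ip -> forall i u, VS i s u -> VS i s' u).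
  { intros s s' Hin i. 
    assert (Hp : rho i (Prec s s')).
    { apply (bigAnd_in Phi (rho i) (Hmc i) _ Hspsi (Hpsi i)).
      apply in_or_app; left. apply in_map_iff. exists (s, s'); auto. }
    exact (Hpsl i _ Hp I). }
  exists (mkM W VS VP ch Hch Hst), (fun j p => VP j p (w0 j)). split.
  - intros i. exists (w0 i). tauto.
  - apply (truth Phi rho W VS VP w0 ch Hch Hst Ip HIp Hmc Hnx Hacc Hpsl); auto.
    + apply good_phiD; auto.
    + apply subf_refl.
Qed.
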